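(* In the conflict-list randomized incremental construction of the Delaunay triangulation of $n$ points in general position with uniformly random insertion order, let $T_k$ denote the work of stage $k$, i.e. $T_k=\sum_{\sigma\in\Delta(v)}\ell(\sigma)$ where $v=p_k$ is the point inserted at stage $k$, $\Delta(v)$ is the set of triangles of the Delaunay triangulation of $\{p_1,\ldots,p_k\}$ incident to $v$, and $\ell(\sigma)$ is the number of points of $P$ lying in $\sigma$. Then $\mathbb{E}[T_k^2]=O(n^2/k)$, and consequently $\sum_{k=1}^n\mathbb{E}[T_k^2]=O(n^2\log n)$.
   Context: General position: no three points collinear and no four points cocircular. The points $p_1,\ldots,p_n$ are the points of $P$ in the order of a uniformly random permutation; $\{p_1,\ldots,p_k\}$ is thus a uniformly random $k$-subset of $P$. *)

(* Defs.v *)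
From HB Require Import structures.
From mathcomp Require Import all_boot all_order all_algebra all_fingroup.
From Stdlib Require Import ClassicalEpsilon.
Set Implicit Arguments. Unset Strict Implicit. Unset Printing Implicit Defensive.
Import Order.TTheory GRing.Theory Num.Theory.
Local Open Scope ring_scope.

(* classical decision of a proposition, to count elements of Prop-defined sets *)
Definition pbool (Q : Prop) : bool :=
  if excluded_middle_informative Q then true else false.

Section Geom.
Variable R : realFieldType.
Definition point := (R * R)%type.

Definition sqdist (a b : point) : R := (a.1 - b.1) ^+ 2 + (a.2 - b.2) ^+ 2.

Definition collinear (a b c : point) : Prop :=
  (b.1 - a.1) * (c.2 - a.2) = (b.2 - a.2) * (c.1 - a.1).

Definition cocircular (a b c d : point) : Prop :=
  exists o : point, sqdist o a = sqdist o b /\ sqdist o a = sqdist o c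
                    /\ sqdist o a = sqdist o d.

Definition in_circumdisk (a b c d : point) : Prop :=
  exists o : point, sqdist o a = sqdist o b /\ sqdist o a = sqdist o c
                    /\ sqdist o d < sqdist o a.

Definition in_triangle (a b c d : point) : Prop :=
  exists x y z : R, [/\ 0 <= x, 0 <= y, 0 <= z, x + y + z = 1 &
    d = (x * a.1 + y * b.1 + z * c.1, x * a.2 + y * b.2 + z * c.2)].

Variable n : nat.
Variable P : 'I_n -> point.

Definition general_position : Prop :=
  injective P /\
  (forall i j l : 'I_n, i != j -> j != l -> i != l -> ~ collinear (P i) (P j) (P l)) /\
  (forall i j l m : 'I_n, uniq [:: i; j; l; m] -> ~ cocircular (P i) (P j) (P l) (P m)).

Definition delaunay_tri (S t : {set 'I_n}) : Prop :=
  #|t| = 3%N /\ t \subset S /\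
  forall a b c : 'I_n, t = [set a; b; c] ->
    forall m : 'I_n, m \in S -> ~ in_circumdisk (P a) (P b) (P c) (P m).

Definition ell (t : {set 'I_n}) : nat :=
  #|[set m : 'I_n | pbool (exists a b c : 'I_n,
        t = [set a; b; c] /\ in_triangle (P a) (P b) (P c) (P m))]|.

(* insertion order s : p_{j+1} = P (s j).  Stage i.+1 inserts v = P (s i);
   the current set is {p_1, ..., p_{i+1}}. *)
Definition stage_set (s : {perm 'I_n}) (i : 'I_n) : {set 'I_n} :=
  [set s j | j : 'I_n & (j <= i)%N].

Definition Delta (s : {perm 'I_n}) (i : 'I_n) : {set {set 'I_n}} :=
  [set t : {set 'I_n} | pbool (delaunay_tri (stage_set s i) t) && (s i \in t)].

(* work T_k at stage k = i.+1 *)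
Definition work (s : {perm 'I_n}) (i : 'I_n) : nat :=
  (\sum_(t in Delta s i) ell t)%N.

Definition ET2 (i : 'I_n) : rat :=
  (\sum_(s : {perm 'I_n}) ((work s i) ^ 2)%N%:R) / (#|{perm 'I_n}|)%:R.
End Geom.

(* Main.v *)
Require Import Defs.
From HB Require Import structures.
From mathcomp Require Import all_boot all_order all_algebra all_fingroup.
From mathcomp Require Import ring lra zify.
From Stdlib Require Import ClassicalEpsilon.
Set Implicit Arguments. Unset Strict Implicit. Unset Printing Implicit Defensive.
Import Order.TTheory GRing.Theory Num.Theory.
Local Open Scope ring_scope.

Lemma sum_in_card (T : finType) (A : {set T}) : (\sum_t (t \in A) = #|A|)%N.
Proof. rewrite -sum1_card [RHS]big_mkcond /=; apply: eq_bigr => t _; by case: (t \in A). Qed.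

Lemma cover_count (T I : finType) (A : {set T}) (F : I -> {set T}) :
  (forall t, t \in A -> exists i, t \in F i) -> (#|A| <= \sum_i #|F i|)%N.
Proof.
move=> H; rewrite -sum1_card.
apply: (@leq_trans (\sum_(t in A) \sum_i (t \in F i))).
  apply: leq_sum => t tA; have [i ti] := H t tA; rewrite (bigD1 i) //= ti; exact: leq_addr.
apply: (@leq_trans (\sum_t \sum_i (t \in F i))).
  rewrite [X in (_ <= X)%N](bigID (fun t => t \in A)) /=; exact: leq_addr.
rewrite exchange_big; apply: leq_sum => i _; by rewrite sum_in_card.
Qed.

Lemma card_le1 (T : finType) (A : {set T}) : (forall x y, x \in A -> y \in A -> x = y) -> (#|A| <= 1)%N.
Proof.
move=> H; apply/card_le1P => x xA y; apply/idP/idP => [yA | /eqP ->//].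
by apply/eqP; apply: H.
Qed.

Lemma sum_cond_card (T : finType) (A : {set T}) (p : pred T) :
  (\sum_(t in A) p t = #|[set t in A | p t]|)%N.
Proof.
rewrite -sum_in_card big_mkcond /=; apply: eq_bigr => t _; rewrite !inE.
by case: (t \in A); case: (p t).
Qed.

Section G.
Variable R : realFieldType.
Lemma circ_ex (a b c : point R) : ~ collinear a b c ->
  exists o, sqdist o a = sqdist o b /\ sqdist o a = sqdist o c.
Proof.
case: a b c => [a1 a2] [b1 b2] [c1 c2] /= nc.
have d0 : (b1-a1)*(c2-a2) - (b2-a2)*(c1-a1) != 0.
  by apply/eqP => h; apply: nc; rewrite /collinear /=; apply/eqP; rewrite -subr_eq0; apply/eqP.
exists (((b1^+2 + b2^+2 - (a1^+2 + a2^+2)) * (c2-a2) - (c1^+2 + c2^+2 - (a1^+2 + a2^+2)) * (b2-a2)) / (2*((b1-a1)*(c2-a2) - (b2-a2)*(c1-a1))),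
 ((c1^+2 + c2^+2 - (a1^+2 + a2^+2)) * (b1-a1) - (b1^+2 + b2^+2 - (a1^+2 + a2^+2)) * (c1-a1)) / (2*((b1-a1)*(c2-a2) - (b2-a2)*(c1-a1)))).
have h2 : (2:R) != 0 by rewrite pnatr_eq0.
rewrite /sqdist /=; split; field.
all: exact: d0.
Qed.


Variable n : nat.

Lemma card3_dist (a b c : 'I_n) : #|[set a; b; c]| = 3%N -> [/\ a != b, b != c & a != c].
Proof.
move=> h; split; apply/eqP => e; subst.
- move: h; rewrite setUid cards2; by case: (_ != _).
- move: h; rewrite -setUA setUid cards2; by case: (_ != _).
- move: h; rewrite setUAC setUid cards2; by case: (_ != _).
Qed.

Lemma card3_of (a b c : 'I_n) : a != b -> b != c -> a != c -> #|[set a; b; c]| = 3%N.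
Proof.
move=> ab bc ac; rewrite setUC cardsU1 cards2 !inE ab negb_or eq_sym ac eq_sym bc //.
Qed.

Lemma card3_ex (t : {set 'I_n}) : #|t| = 3%N -> exists a b c, t = [set a; b; c].
Proof.
move=> h; have : (2 < #|t|)%N by rewrite h.
case/card_gt2P => [x [y [z [[xt yt zt] [xy yz zx]]]]].
exists x, y, z; apply/esym/eqP; rewrite eqEcard h; apply/andP; split.
  by apply/subsetP => u; rewrite !inE => /orP [/orP [] | ] /eqP ->.
by rewrite card3_of // eq_sym.
Qed.

Variable P : 'I_n -> point R.
Hypothesis gp : general_position P.

Lemma gp_inj : injective P. Proof. by case: gp. Qed.
Lemma gp_nc i j l : i != j -> j != l -> i != l -> ~ collinear (P i) (P j) (P l).
Proof. by case: gp => _ [h _]; apply: h. Qed.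
Lemma gp_ncc i j l m : uniq [:: i; j; l; m] -> ~ cocircular (P i) (P j) (P l) (P m).
Proof. by case: gp => _ [_ h]; apply: h. Qed.

Lemma del_center S t a b c : delaunay_tri P S t -> t = [set a; b; c] ->
  exists o : point R, exists r : R,
   (forall m, m \in t -> sqdist o (P m) = r) /\
   (forall m, m \in S -> m \notin t -> r < sqdist o (P m)).
Proof.
move=> [t3 [tS emp]] et.
have [ab bc ac] : [/\ a != b, b != c & a != c] by apply: card3_dist; rewrite -et.
have [o [h1 h2]] := circ_ex (gp_nc ab bc ac).
exists o, (sqdist o (P a)); split.
  by move=> m; rewrite et !inE => /orP [/orP [] | ] /eqP ->.
move=> m mS; rewrite et !inE !negb_or => /andP [/andP [ma mb] mc].
have nin := emp a b c et m mS.
have nle : ~ (sqdist o (P m) < sqdist o (P a)) by move=> hl; apply: nin; exists o.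
have ne : sqdist o (P m) != sqdist o (P a).
  apply/eqP => e; apply: (@gp_ncc a b c m).
    by rewrite /= !inE !negb_or ab ac bc !(eq_sym _ m) ma mb mc.
  by exists o; rewrite e.
by rewrite lt_neqAle eq_sym ne /= leNgt; apply/negP.
Qed.

Definition hq (o1 o2 : point R) (r1 r2 : R) (p : point R) :=
  (sqdist o1 p - r1) - (sqdist o2 p - r2).

Lemma hq_aff o1 o2 r1 r2 (A B C : point R) x y z : x + y + z = 1 ->
  hq o1 o2 r1 r2 (x * A.1 + y * B.1 + z * C.1, x * A.2 + y * B.2 + z * C.2)
  = x * hq o1 o2 r1 r2 A + y * hq o1 o2 r1 r2 B + z * hq o1 o2 r1 r2 C.
Proof.
move=> h; have -> : z = 1 - x - y by rewrite -h; ring.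
rewrite /hq /sqdist /=; ring.
Qed.

Lemma on_edge u w j (y z : R) : u != w -> j != u -> j != w -> y + z = 1 ->
  P j = (y * (P u).1 + z * (P w).1, y * (P u).2 + z * (P w).2) -> False.
Proof.
move=> uw ju jw yz e; apply: (@gp_nc u w j uw); first by rewrite eq_sym.
  by rewrite eq_sym.
rewrite /collinear e /=; have -> : y = 1 - z by rewrite -yz; ring.
ring.
Qed.

Definition ingeom (t : {set 'I_n}) (j : 'I_n) : Prop :=
  exists a b c : 'I_n, t = [set a; b; c] /\ in_triangle (P a) (P b) (P c) (P j).

Lemma ingeom_vertex S t1 t2 j : delaunay_tri P S t1 -> delaunay_tri P S t2 -> t1 != t2 ->
  ingeom t1 j -> ingeom t2 j -> j \in t1.
Proof.
move=> d1 d2 t12 [a [b [c [e1 [x [y [z [x0 y0 z0 xyz ej]]]]]]]]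
                [a' [b' [c' [e2 [x' [y' [z' [x0' y0' z0' xyz' ej']]]]]]]].
apply/negPn/negP => jt.
have [ab bc ac] : [/\ a != b, b != c & a != c] by apply: card3_dist; rewrite -e1; case: d1.
move: jt; rewrite e1 !inE !negb_or => /andP [/andP [ja jb] jc].
have xp : 0 < x.
  rewrite lt_neqAle x0 andbT; apply/negP => /eqP x00; subst x.
  by apply: (@on_edge b c j y z) => //; [rewrite -xyz; ring | rewrite ej; congr (_, _); ring].
have yp : 0 < y.
  rewrite lt_neqAle y0 andbT; apply/negP => /eqP y00; subst y.
  by apply: (@on_edge a c j x z) => //; [rewrite -xyz; ring | rewrite ej; congr (_, _); ring].
have zp : 0 < z.
  rewrite lt_neqAle z0 andbT; apply/negP => /eqP z00; subst z.
  by apply: (@on_edge a b j x y) => //; [rewrite -xyz; ring | rewrite ej; congr (_, _); ring].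
have [o1 [r1 [v1 s1]]] := del_center d1 e1.
have [o2 [r2 [v2 s2]]] := del_center d2 e2.
have [_ [t1S _]] := d1; have [_ [t2S _]] := d2.
have inS u : u \in t1 -> u \in S by move=> ut; apply: (subsetP t1S).
have inS' u : u \in t2 -> u \in S by move=> ut; apply: (subsetP t2S).
have q2ge u : u \in S -> r2 <= sqdist o2 (P u).
  move=> uS; case: (boolP (u \in t2)) => ut; first by rewrite v2.
  by apply/ltW; apply: s2.
have q1ge u : u \in S -> r1 <= sqdist o1 (P u).
  move=> uS; case: (boolP (u \in t1)) => ut; first by rewrite v1.
  by apply/ltW; apply: s1.
have at1 : a \in t1 by rewrite e1 !inE eqxx.
have bt1 : b \in t1 by rewrite e1 !inE eqxx orbT.
have ct1 : c \in t1 by rewrite e1 !inE eqxx orbT.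
have at2 : a' \in t2 by rewrite e2 !inE eqxx.
have bt2 : b' \in t2 by rewrite e2 !inE eqxx orbT.
have ct2 : c' \in t2 by rewrite e2 !inE eqxx orbT.
have H1 := hq_aff o1 o2 r1 r2 (P a) (P b) (P c) xyz.
have H2 := hq_aff o1 o2 r1 r2 (P a') (P b') (P c') xyz'.
rewrite -ej in H1; rewrite -ej' in H2.
move: H1 H2; rewrite /hq (v1 a at1) (v1 b bt1) (v1 c ct1) (v2 a' at2) (v2 b' bt2) (v2 c' ct2) !subrr.
have := q2ge a (inS a at1); have := q2ge b (inS b bt1); have := q2ge c (inS c ct1).
have := q1ge a' (inS' a' at2); have := q1ge b' (inS' b' bt2); have := q1ge c' (inS' c' ct2).
set A := sqdist o2 (P a); set B := sqdist o2 (P b); set C := sqdist o2 (P c).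
set A' := sqdist o1 (P a'); set B' := sqdist o1 (P b'); set C' := sqdist o1 (P c').
set J := sqdist o1 (P j) - r1 - (sqdist o2 (P j) - r2).
move=> hc' hb' ha' hc hb ha H1 H2.
have hA : A <= r2 by nra.
have hB : B <= r2 by nra.
have hC : C <= r2 by nra.
have aint2 : a \in t2.
  apply/negPn/negP => nt; have := s2 a (inS a at1) nt; rewrite -/A; lra.
have bint2 : b \in t2.
  apply/negPn/negP => nt; have := s2 b (inS b bt1) nt; rewrite -/B; lra.
have cint2 : c \in t2.
  apply/negPn/negP => nt; have := s2 c (inS c ct1) nt; rewrite -/C; lra.
move/eqP: t12; apply; apply/eqP; rewrite eqEcard; apply/andP; split.
  by rewrite e1; apply/subsetP => u; rewrite !inE => /orP [/orP [] | ] /eqP ->.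
by case: d1 => ->; case: d2 => ->.
Qed.

Definition lexneg (u : point R) : bool := (u.1 < 0) || ((u.1 == 0) && (u.2 < 0)).
Definition dif (p q : point R) : point R := (p.1 - q.1, p.2 - q.2).
Definition cross (u v : point R) : R := u.1 * v.2 - u.2 * v.1.
Definition Tb (u : point R) : R := if u.1 < 0 then - u.1 / (`|u.2| + 1) else 1.

Lemma Tb_pos u : 0 < Tb u.
Proof.
rewrite /Tb; case: ifP => // h; apply: divr_gt0; first by rewrite oppr_gt0.
by apply: ltr_wpDl.
Qed.

Lemma Tb_ok u t : lexneg u -> 0 < t -> t <= Tb u -> u.1 + t * u.2 < 0.
Proof.
rewrite /lexneg /Tb => /orP [h | /andP [/eqP h1 h2]] t0.
  rewrite h ler_pdivlMr; last by apply: ltr_wpDl.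
  move=> ht; have hy : t * u.2 <= t * `|u.2| by exact: (ler_wpM2l (ltW t0) (ler_norm u.2)).
  lra.
rewrite h1 ltxx /= => _; rewrite add0r; nra.
Qed.

Lemma cross_id (A C w G : point R) :
  cross A C ^+ 2 * (G.1 * w.1 + G.2 * w.2) =
  (cross w C * cross A C) * (G.1 * A.1 + G.2 * A.2) + (cross A w * cross A C) * (G.1 * C.1 + G.2 * C.2).
Proof. rewrite /cross; ring. Qed.

Definition dot (u v : point R) : R := u.1 * v.1 + u.2 * v.2.
Definition negp (u : point R) : point R := (- u.1, - u.2).

Lemma core (A1 C1 A2 C2 G w : point R) : cross A1 C1 != 0 -> cross A2 C2 != 0 ->
  0 < cross w C1 * cross A1 C1 -> 0 < cross A1 w * cross A1 C1 ->
  0 < cross w C2 * cross A2 C2 -> 0 < cross A2 w * cross A2 C2 ->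
  dot G A1 <= 0 -> dot G C1 <= 0 -> 0 <= dot G A2 -> 0 <= dot G C2 ->
  dot G A1 = 0 /\ dot G C1 = 0.
Proof.
move=> k1 k2 p1 q1 p2 q2 a1 c1 a2 c2.
have e1 := cross_id A1 C1 w G; have e2 := cross_id A2 C2 w G.
rewrite -/(dot G w) -/(dot G A1) -/(dot G C1) in e1.
rewrite -/(dot G w) -/(dot G A2) -/(dot G C2) in e2.
have s1 : 0 < cross A1 C1 ^+ 2 by rewrite exprn_even_gt0.
have s2 : 0 < cross A2 C2 ^+ 2 by rewrite exprn_even_gt0.
move: e1 e2 s1 s2 p1 q1 p2 q2.
set K1 := cross A1 C1 ^+ 2; set K2 := cross A2 C2 ^+ 2.
set X := dot G w; set P1 := cross w C1 * cross A1 C1; set Q1 := cross A1 w * cross A1 C1.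
set P2 := cross w C2 * cross A2 C2; set Q2 := cross A2 w * cross A2 C2.
move=> e1 e2 s1 s2 p1 q1 p2 q2.
have X1 : K1 * X <= 0 by rewrite e1; nra.
have X2 : 0 <= K2 * X by rewrite e2; nra.
have X0 : X = 0 by nra.
move: e1; rewrite X0 mulr0 => e1.
split; nra.
Qed.

Lemma choose_w (b : bool) (A1 C1 A2 C2 : point R) :
  lexneg A1 -> lexneg (negp C1) -> lexneg A2 -> lexneg (negp C2) ->
  cross A1 C1 != 0 -> cross A2 C2 != 0 ->
  (0 < cross A1 C1) = b -> (0 < cross A2 C2) = b ->
  exists w, [/\ 0 < cross w C1 * cross A1 C1, 0 < cross A1 w * cross A1 C1,
     0 < cross w C2 * cross A2 C2 & 0 < cross A2 w * cross A2 C2].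
Proof.
move=> la1 lc1 la2 lc2 k1 k2 b1 b2.
set t := Num.min (Num.min (Tb A1) (Tb A2)) (Num.min (Tb (negp C1)) (Tb (negp C2))).
have t0 : 0 < t by rewrite !lt_min !Tb_pos.
have ta1 : t <= Tb A1 by rewrite /t !ge_min lexx.
have ta2 : t <= Tb A2 by rewrite /t !ge_min lexx !orbT.
have tc1 : t <= Tb (negp C1) by rewrite /t !ge_min lexx !orbT.
have tc2 : t <= Tb (negp C2) by rewrite /t !ge_min lexx !orbT.
have ha1 := Tb_ok la1 t0 ta1; have ha2 := Tb_ok la2 t0 ta2.
have hc1 := Tb_ok lc1 t0 tc1; have hc2 := Tb_ok lc2 t0 tc2.
move: hc1 hc2; rewrite /negp /= => hc1 hc2.
case: b b1 b2 => b1 b2.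
- exists (t, -1); rewrite /cross /= in b1 b2 k1 k2 *.
  split; apply: mulr_gt0; rewrite ?b1 ?b2 //; lra.
- have n1 : cross A1 C1 < 0 by rewrite lt_neqAle k1 leNgt b1.
  have n2 : cross A2 C2 < 0 by rewrite lt_neqAle k2 leNgt b2.
  exists (-t, 1); rewrite /cross /= in n1 n2 *.
  split; nra.
Qed.

Definition lexlt (p q : point R) : bool := lexneg (dif p q).

Lemma lexlt_irr p : ~~ lexlt p p.
Proof. by rewrite /lexlt /lexneg /dif /= !subrr ltxx eqxx. Qed.

Lemma lexlt_asym p q : lexlt p q -> ~~ lexlt q p.
Proof.
rewrite /lexlt /lexneg /dif /= => /orP [h | /andP [/eqP h1 h2]];
  apply/negP => /orP [h' | /andP [/eqP h1' h2']]; lra.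
Qed.

Lemma hq_lin o1 o2 r1 r2 p q :
  hq o1 o2 r1 r2 p - hq o1 o2 r1 r2 q =
  dot (2 * (o2.1 - o1.1), 2 * (o2.2 - o1.2)) (dif p q).
Proof. rewrite /hq /dot /dif /sqdist /=; ring. Qed.

Lemma three_eq (t : {set 'I_n}) a b c : #|t| = 3%N -> a \in t -> b \in t -> c \in t ->
  a != b -> b != c -> a != c -> t = [set a; b; c].
Proof.
move=> h ha hb hc ab bc ac; apply/eqP; rewrite eq_sym eqEcard h card3_of // leqnn andbT.
by apply/subsetP => u; rewrite !inE => /orP [/orP [] | ] /eqP ->.
Qed.

Lemma fan_uniq S v (b : bool) t1 t2 a1 c1 a2 c2 :
  delaunay_tri P S t1 -> delaunay_tri P S t2 ->
  v \in t1 -> a1 \in t1 -> c1 \in t1 -> v \in t2 -> a2 \in t2 -> c2 \in t2 ->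
  lexlt (P a1) (P v) -> lexlt (P v) (P c1) -> lexlt (P a2) (P v) -> lexlt (P v) (P c2) ->
  (0 < cross (dif (P a1) (P v)) (dif (P c1) (P v))) = b ->
  (0 < cross (dif (P a2) (P v)) (dif (P c2) (P v))) = b -> t1 = t2.
Proof.
move=> d1 d2 vt1 at1 ct1 vt2 at2 ct2 l1 l2 l3 l4 b1 b2.
have dist a c : lexlt (P a) (P v) -> lexlt (P v) (P c) -> [/\ a != v, v != c & a != c].
  move=> la lc; split; apply/negP => /eqP e.
  - by move: la; rewrite e; move/negP: (lexlt_irr (P v)).
  - by move: lc; rewrite -e; move/negP: (lexlt_irr (P v)).
  - by move: la; rewrite e => la; move/negP: (lexlt_asym la).
have [av1 vc1 ac1] := dist _ _ l1 l2; have [av2 vc2 ac2] := dist _ _ l3 l4.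
have e1 : t1 = [set a1; v; c1] by apply: three_eq => //; case: d1.
have e2 : t2 = [set a2; v; c2] by apply: three_eq => //; case: d2.
have [o1 [r1 [v1 s1]]] := del_center d1 e1.
have [o2 [r2 [v2 s2]]] := del_center d2 e2.
have [_ [t1S _]] := d1; have [_ [t2S _]] := d2.
have nck a c : a != v -> v != c -> a != c -> cross (dif (P a) (P v)) (dif (P c) (P v)) != 0.
  move=> av vc ac; apply/eqP => e; apply: (@gp_nc v a c); [by rewrite eq_sym | by [] | by [] | ].
  by rewrite /collinear; move: e; rewrite /cross /dif /= => /eqP; rewrite subr_eq0 => /eqP.
have ln c : lexlt (P v) (P c) -> lexneg (negp (dif (P c) (P v))).
  by rewrite /lexlt /negp /dif /= !opprB.
have [w [p1 q1 p2 q2]] := choose_w l1 (ln _ l2) l3 (ln _ l4) (nck _ _ av1 vc1 ac1)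
   (nck _ _ av2 vc2 ac2) b1 b2.
set G := (2 * (o2.1 - o1.1), 2 * (o2.2 - o1.2)).
have hv : hq o1 o2 r1 r2 (P v) = 0 by rewrite /hq v1 // v2 // !subrr.
have hd u : dot G (dif (P u) (P v)) = hq o1 o2 r1 r2 (P u) by rewrite -(hq_lin o1 o2 r1 r2) hv subr0.
have g1 u : u \in t1 -> dot G (dif (P u) (P v)) = - (sqdist o2 (P u) - r2).
  by move=> ut; rewrite hd /hq v1 // subrr sub0r.
have g2 u : u \in t2 -> dot G (dif (P u) (P v)) = sqdist o1 (P u) - r1.
  by move=> ut; rewrite hd /hq v2 // subrr subr0.
have q2ge u : u \in S -> r2 <= sqdist o2 (P u).
  move=> uS; case: (boolP (u \in t2)) => ut; first by rewrite v2.
  by apply/ltW; apply: s2.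
have q1ge u : u \in S -> r1 <= sqdist o1 (P u).
  move=> uS; case: (boolP (u \in t1)) => ut; first by rewrite v1.
  by apply/ltW; apply: s1.
have inS u : u \in t1 -> u \in S by move=> ut; apply: (subsetP t1S).
have inS' u : u \in t2 -> u \in S by move=> ut; apply: (subsetP t2S).
have [z1 z2] := @core (dif (P a1) (P v)) (dif (P c1) (P v)) (dif (P a2) (P v)) (dif (P c2) (P v)) G w (nck _ _ av1 vc1 ac1) (nck _ _ av2 vc2 ac2) p1 q1 p2 q2
  (ltac:(rewrite g1 // oppr_le0 subr_ge0; exact: q2ge (inS _ at1)))
  (ltac:(rewrite g1 // oppr_le0 subr_ge0; exact: q2ge (inS _ ct1)))
  (ltac:(rewrite g2 // subr_ge0; exact: q1ge (inS' _ at2)))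
  (ltac:(rewrite g2 // subr_ge0; exact: q1ge (inS' _ ct2))).
have in2 u : u \in t1 -> dot G (dif (P u) (P v)) = 0 -> u \in t2.
  move=> ut z; apply/negPn/negP => nt; have := s2 u (inS _ ut) nt.
  by move: z; rewrite g1 // => /eqP; rewrite oppr_eq0 subr_eq0 => /eqP ->; rewrite ltxx.
apply/eqP; rewrite eqEcard; apply/andP; split.
  rewrite e1; apply/subsetP => u; rewrite !inE => /orP [/orP [] | ] /eqP -> //.
  - by apply: in2.
  - by apply: in2.
by case: d1 => ->; case: d2 => ->.
Qed.

Lemma pboolP (Q : Prop) : reflect Q (pbool Q).
Proof. rewrite /pbool; case: excluded_middle_informative => h; by constructor. Qed.

Definition Del S := [set t : {set 'I_n} | pbool (delaunay_tri P S t)].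

Lemma lexlt_total p q : p != q -> lexlt p q || lexlt q p.
Proof.
case: p q => [p1 p2] [q1 q2] ne; rewrite /lexlt /lexneg /dif /=.
case: (ltgtP p1 q1) => h1.
- by apply/orP; left; apply/orP; left; lra.
- by apply/orP; right; apply/orP; left; lra.
- subst; rewrite !subrr ltxx eqxx /=.
  case: (ltgtP p2 q2) => h2.
  + by rewrite subr_lt0 h2.
  + by apply/orP; right; rewrite subr_lt0 h2.
  + by subst; rewrite eqxx in ne.
Qed.

Lemma middle (x y z : 'I_n) : x != y -> y != z -> x != z ->
  exists a m c, [/\ a \in [set x; y; z], m \in [set x; y; z], c \in [set x; y; z],
    lexlt (P a) (P m) & lexlt (P m) (P c)].
Proof.
move=> xy yz xz.
have cmp u w : u != w -> lexlt (P u) (P w) || lexlt (P w) (P u).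
  move=> uw; apply: lexlt_total; apply: contra uw => /eqP e; apply/eqP; exact: gp_inj.
have ix : x \in [set x; y; z] by rewrite !inE eqxx.
have iy : y \in [set x; y; z] by rewrite !inE eqxx orbT.
have iz : z \in [set x; y; z] by rewrite !inE eqxx orbT.
case/orP: (cmp x y xy) => hxy; case/orP: (cmp y z yz) => hyz; case/orP: (cmp x z xz) => hxz.
all: first [ by exists x, y, z | by exists x, z, y | by exists z, x, y
           | by exists y, x, z | by exists y, z, x | by exists z, y, x ].
Qed.

Definition Fan S v (b : bool) := [set t in Del S | pbool (exists a c, v \in t /\ [/\ a \in t, c \in t,
  lexlt (P a) (P v), lexlt (P v) (P c) &
  (0 < cross (dif (P a) (P v)) (dif (P c) (P v))) = b])].

Lemma Del_count S : (#|Del S| <= 2 * n)%N.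
Proof.
apply: (@leq_trans (\sum_(i : 'I_n * bool) #|Fan S i.1 i.2|)).
  apply: cover_count => t; rewrite inE => /pboolP d.
  have [x [y [z e]]] := card3_ex (proj1 d).
  have [xy yz xz] : [/\ x != y, y != z & x != z] by apply: card3_dist; rewrite -e; case: d.
  have [a [m [c [ha hm hc l1 l2]]]] := middle xy yz xz.
  exists (m, 0 < cross (dif (P a) (P m)) (dif (P c) (P m))).
  rewrite /Fan !inE /=; apply/andP; split; first by apply/pboolP.
  by apply/pboolP; exists a, c; rewrite e.
apply: (@leq_trans (\sum_(i : 'I_n * bool) 1)).
  apply: leq_sum => [[v b]] _ /=; apply: card_le1 => t1 t2.
  rewrite !inE => /andP [/pboolP d1 /pboolP [a1 [c1 [v1 [a1t c1t la1 lc1 b1]]]]].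
  move=> /andP [/pboolP d2 /pboolP [a2 [c2 [v2 [a2t c2t la2 lc2 b2]]]]].
  exact: (fan_uniq d1 d2 v1 a1t c1t v2 a2t c2t la1 lc1 la2 lc2 b1 b2).
by rewrite sum1_card card_prod card_ord card_bool mulnC.
Qed.

Lemma ell_sum S : (\sum_(t in Del S) ell P t <= n + 3 * #|Del S|)%N.
Proof.
have -> : (\sum_(t in Del S) ell P t = \sum_(t in Del S) \sum_m (pbool (ingeom t m) : nat))%N.
  apply: eq_bigr => t _; rewrite /ell -sum_in_card; apply: eq_bigr => m _; by rewrite inE.
rewrite exchange_big /=.
apply: (@leq_trans (\sum_m (1 + \sum_(t in Del S) (m \in t : nat)))%N).
  apply: leq_sum => m _; rewrite !sum_cond_card.
  set X := [set t in Del S | _]; set Z := [set t in Del S | m \in t].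
  set Y := [set t in Del S | pbool (ingeom t m) && (m \notin t)].
  apply: (@leq_trans #|Y :|: Z|).
    apply: subset_leq_card; apply/subsetP => t; rewrite !inE.
    by case: (pbool (delaunay_tri _ _ _)); case: (pbool (ingeom _ _)); case: (m \in t).
  rewrite cardsU; apply: (@leq_trans (#|Y| + #|Z|)); first exact: leq_subr.
  rewrite leq_add2r; apply: card_le1 => t1 t2.
  rewrite !inE => /andP [/pboolP d1 /andP [/pboolP g1 n1]] /andP [/pboolP d2 /andP [/pboolP g2 n2]].
  apply/eqP; apply/negPn/negP => ne.
  by move: n1; rewrite (ingeom_vertex d1 d2 ne g1 g2).
rewrite big_split /= sum1_card card_ord leq_add2l exchange_big /=.
rewrite -sum1_card big_distrr /= muln1; apply: leq_sum => t; rewrite inE => /pboolP [t3 _].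
by rewrite sum_in_card t3.
Qed.

Definition W (s : {perm 'I_n}) (i j : 'I_n) : nat :=
  (\sum_(t in Del (stage_set s i) | s j \in t) ell P t)%N.

Lemma work_W s i : work P s i = W s i i.
Proof. by apply: eq_bigl => t; rewrite !inE. Qed.

Lemma W_le s i j : (W s i j <= \sum_(t in Del (stage_set s i)) ell P t)%N.
Proof. rewrite /W big_mkcondr /=; apply: leq_sum => t _; by case: ifP. Qed.

Lemma L_le S : (\sum_(t in Del S) ell P t <= 7 * n)%N.
Proof.
apply: leq_trans (ell_sum S) _.
have := Del_count S; lia.
Qed.

Lemma work_le s i : (work P s i <= 7 * n)%N.
Proof. rewrite work_W; apply: leq_trans (W_le s i i) (L_le _). Qed.

Lemma stage_tperm (s : {perm 'I_n}) (i j : 'I_n) : (j <= i)%N ->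
  stage_set (tperm i j * s)%g i = stage_set s i.
Proof.
move=> ji.
have key (x : 'I_n) : (x <= i)%N = (tperm i j x <= i)%N.
  by case: tpermP => [-> | -> |] //; rewrite leqnn ji.
apply/setP => u; apply/imsetP/imsetP => [[x] | [x]]; rewrite inE => xi ->.
  by exists (tperm i j x); rewrite ?inE -?key ?permM.
exists (tperm i j x); first by rewrite inE -key.
by rewrite permM tpermK.
Qed.

Lemma sum_W_swap (i j : 'I_n) : (j <= i)%N ->
  (\sum_(s : {perm 'I_n}) W s i i = \sum_(s : {perm 'I_n}) W s i j)%N.
Proof.
move=> ji; rewrite (reindex_inj (mulgI (tperm i j))) /=.
apply: eq_bigr => s _; rewrite /W stage_tperm // permM tpermL //.
Qed.

Lemma card_inj_pre (T U : finType) (f : T -> U) (A : {set U}) : injective f ->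
  (#|[set x | f x \in A]| <= #|A|)%N.
Proof.
move=> fi; rewrite -(card_imset _ fi); apply: subset_leq_card.
by apply/subsetP => u /imsetP [x]; rewrite inE => h ->.
Qed.

Lemma sum_work_le (i : 'I_n) :
  (i.+1 * \sum_(s : {perm 'I_n}) work P s i <= 21 * n * #|{perm 'I_n}|)%N.
Proof.
have lt : (i.+1 <= n)%N by exact: ltn_ord.
have -> : (i.+1 * \sum_(s : {perm 'I_n}) work P s i =
   \sum_(j : 'I_i.+1) \sum_(s : {perm 'I_n}) W s i (widen_ord lt j))%N.
  transitivity (\sum_(j : 'I_i.+1) \sum_(s : {perm 'I_n}) work P s i)%N.
    by rewrite sum_nat_const card_ord.
  apply: eq_bigr => j _.
  under eq_bigr => s _ do rewrite work_W.
  by apply: sum_W_swap; rewrite /= -ltnS.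
rewrite exchange_big /=.
apply: (@leq_trans (\sum_(s : {perm 'I_n}) 21 * n)%N); last by rewrite sum_nat_const mulnC.
apply: leq_sum => s _.
rewrite /W (exchange_big_dep (mem (Del (stage_set s i)))) /=; last by move=> j t _ /andP [].
apply: (@leq_trans (\sum_(t in Del (stage_set s i)) 3 * ell P t)%N).
  apply: leq_sum => t; rewrite inE => /pboolP [t3 _].
  under eq_bigr do rewrite -[ell P t]mul1n.
  rewrite -big_distrl /= sum1_card leq_mul2r; apply/orP; right.
  rewrite -t3; apply: (@leq_trans #|[set j : 'I_i.+1 | s (widen_ord lt j) \in t]|).
    by apply: subset_leq_card; apply/subsetP => x; rewrite !inE => /andP [].
  apply: card_inj_pre.
  by move=> x y /= /perm_inj /(congr1 val) /= /val_inj.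
rewrite -big_distrr /= (_ : 21 * n = 3 * (7 * n))%N; last by rewrite mulnA.
by rewrite leq_mul2l L_le orbT.
Qed.

Lemma sum_work2_le (i : 'I_n) :
  (i.+1 * \sum_(s : {perm 'I_n}) (work P s i) ^ 2 <= 147 * n ^ 2 * #|{perm 'I_n}|)%N.
Proof.
apply: (@leq_trans (i.+1 * \sum_(s : {perm 'I_n}) 7 * n * work P s i)%N).
  rewrite leq_mul2l; apply/orP; right; apply: leq_sum => s _.
  by rewrite expnS expn1 leq_mul2r work_le orbT.
rewrite -big_distrr /= mulnCA.
apply: (@leq_trans (7 * n * (21 * n * #|{perm 'I_n}|))%N).
  by rewrite leq_mul2l sum_work_le orbT.
rewrite leq_eqVlt; apply/orP; left; apply/eqP; rewrite expnS expn1; ring.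
Qed.

Lemma ET2_le (c : nat) (i : 'I_n) : (147 <= c)%N ->
  ET2 P i <= c%:R * (n ^ 2)%N%:R / (i.+1)%:R.
Proof.
move=> hc; rewrite /ET2 -natr_sum.
have N0 : (0 < #|{perm 'I_n}|)%N by rewrite card_Sn fact_gt0.
rewrite ler_pdivrMr ?ltr0n // mulrAC ler_pdivlMr ?ltr0n //.
rewrite -!natrM ler_nat mulnC.
apply: leq_trans (sum_work2_le i) _.
by rewrite leq_mul2r leq_mul2r hc !orbT.
Qed.

Lemma ET2_small (i : 'I_n) : (n <= 2)%N -> ET2 P i = 0.
Proof.
move=> n2; rewrite /ET2 big1 ?mul0r // => s _.
rewrite /work big1 // => t; rewrite inE => /andP [/pboolP [t3 _] _].
by have := max_card (mem t); rewrite card_ord t3 => h; have : (3 <= 2)%N by apply: leq_trans h n2.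
Qed.
End G.

Definition H (N : nat) : rat := \sum_(i < N) ((i.+1)%:R)^-1.

Lemma H_mono a b : (a <= b)%N -> H a <= H b.
Proof.
move=> ab; rewrite /H -!(big_mkord xpredT (fun i => ((i.+1)%:R)^-1)).
rewrite (@big_cat_nat _ _ _ a 0 b) //= lerDl.
by apply: sumr_ge0 => i _; rewrite invr_ge0 ler0n.
Qed.

Lemma H_pow m : H (2 ^ m) <= m%:R + 1.
Proof.
elim: m => [|m IH]; first by rewrite /H expn0 big_ord1 invr1 add0r.
rewrite /H -(big_mkord xpredT (fun i => ((i.+1)%:R)^-1)).
have le1 : (2 ^ m <= 2 ^ m.+1)%N by rewrite leq_exp2l.
rewrite (@big_cat_nat _ _ _ (2 ^ m) 0 (2 ^ m.+1)) //= big_mkord -/(H (2 ^ m)).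
rewrite -natr1 lerD //.
apply: (@le_trans _ _ (\sum_(2 ^ m <= i < 2 ^ m.+1) ((2 ^ m)%:R : rat)^-1)).
  rewrite !big_nat; apply: ler_sum => i /andP [hi _].
  rewrite lef_pV2 ?posrE ?ltr0n ?expn_gt0 // ler_nat; exact: leqW.
have e (x : rat) : x *+ (2 ^ m) = x * (2 ^ m)%:R by rewrite mulr_natr.
rewrite sumr_const_nat expnS mul2n -addnn addnK e mulVf //.
by rewrite pnatr_eq0 -lt0n expn_gt0.
Qed.

Lemma H_le N : (0 < N)%N -> H N <= (trunc_log 2 N)%:R + 2.
Proof.
move=> N0; apply: le_trans (H_mono (ltnW (trunc_log_ltn N (isT : (1 < 2)%N)))) _.
by apply: le_trans (H_pow _) _; rewrite -natr1 -addrA lerD // ler_nat.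
Qed.

Lemma final_ineq (c x l h : rat) : 0 <= c -> 0 <= x -> 1 <= l -> h <= l + 2 ->
  c * (x * h) <= 3 * c * (x * l).
Proof.
move=> c0 x0 l1 hh.
have h1 : x * h <= x * (l + 2) by rewrite ler_wpM2l.
have h2 : 0 <= x * (l - 1) by rewrite mulr_ge0 // subr_ge0.
have h3 : c * (x * h) <= c * (x * (l + 2)) by rewrite ler_wpM2l.
have h4 : 0 <= c * (x * (l - 1)) by rewrite mulr_ge0.
apply: le_trans h3 _.
have -> : 3 * c * (x * l) = c * (x * (l + 2)) + 2 * (c * (x * (l - 1))) by ring.
by rewrite lerDl mulr_ge0.
Qed.

Theorem mainTheorem6 :
  exists C : nat,
  forall (R : realFieldType) (n : nat) (P : 'I_n -> point R),
    general_position P ->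
    (forall i : 'I_n, ET2 P i <= C%:R * (n ^ 2)%N%:R / (i.+1)%:R) /\
    \sum_(i < n) ET2 P i <= C%:R * (n ^ 2 * trunc_log 2 n)%N%:R.
Proof.
exists (3 * 147)%N => R n P gp; split.
  by move=> i; apply: ET2_le.
case: (leqP n 2) => n2.
  rewrite big1; first by apply: mulr_ge0; apply: ler0n.
  by move=> i _; apply: ET2_small.
apply: (@le_trans _ _ (\sum_(i < n) 147%:R * (n ^ 2)%N%:R / (i.+1)%:R)).
  by apply: ler_sum => i _; apply: ET2_le.
rewrite -mulr_sumr -/(H n) -mulrA.
have hH := H_le (ltnW (ltnW n2)).
have L1 : (1 <= trunc_log 2 n)%N by rewrite trunc_log_gt0 /= ltnW.
move: hH; rewrite natrM.
have x0 : 0 <= ((n ^ 2)%N%:R : rat) by rewrite ler0n.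
have l1 : 1 <= ((trunc_log 2 n)%:R : rat) by rewrite ler1n.
set x := ((n ^ 2)%N%:R : rat); set l := ((trunc_log 2 n)%:R : rat).
move=> hH.
rewrite natrM.
have p0 : (0 : rat) <= 147%:R by rewrite ler0n.
exact: (final_ineq p0 x0 l1 hH).
Qed.
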